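(* Let $v>0$ and let $y^*\in\mathbb{R}^{n^+}$ be defined by $y^*_j=Y$ for $1\le j\le J$ and $y^*_j=\left(\frac{J h^+_j}{S}\right)^{\frac{\alpha}{1-\alpha}}Y$ for $J<j\le n^+$, where $J$ is the transitional index, $S=\sum_{j'=1}^{J}h^+_{j'}$ and $Y=\frac{v S^{\alpha/(1-\alpha)}}{S^{1/(1-\alpha)}+J^{\alpha/(1-\alpha)}\sum_{j'=J+1}^{n^+}(h^+_{j'})^{1/(1-\alpha)}}$. Put $\bar\alpha=1/\alpha$ and define $$\mu_j=-\frac{\bar\alpha}{v}\Big[\sum_{j'=1}^{n^+}(y^*_{j'})^{\bar\alpha}\Big]\Big(\sum_{j'=j}^{n^+}h^+_{j'}\Big)+\bar\alpha\Big[\sum_{j'=j}^{n^+}(y^*_{j'})^{\bar\alpha-1}\Big]\quad(j=1,\dots,n^+),\qquad \Lambda=-\frac{\bar\alpha\sum_{j'=1}^{n^+}(y^*_{j'})^{\bar\alpha}}{v}.$$ Then $(y,\mu,\Lambda)=(y^*,\mu,\Lambda)$ satisfies: $\bar\alpha y_j^{\bar\alpha-1}+\mu_{j+1}-\mu_j+\Lambda h^+_j=0$ for all $j\in\{1,\dots,n^+-1\}$; $\bar\alpha y_{n^+}^{\bar\alpha-1}-\mu_{n^+}+\Lambda h^+_{n^+}=0$; $\mu_{j+1}(y_j-y_{j+1})=0$ for $j\in\{1,\dots,n^+-1\}$ and $\mu_1y_1=0$; $\sum_{j=1}^{n^+}h^+_jy_j=v$; $\mu_j\ge 0$ for all $j$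 and $0\le y_1\le\cdots\le y_{n^+}$.
   Context: Fix $N\in\mathbb{N}$, $\alpha\in(0,1)$ and an integer $1\le n^+\le N$. A function $f:[0,1]\to\mathbb{R}$ is inverse S-shaped if it is strictly increasing, continuously differentiable, and there is $x_0\in[0,1]$ such that $f'$ is strictly decreasing on $[0,x_0]$ and strictly increasing on $[x_0,1]$. Let $W^+:[0,1]\to[0,1]$ be inverse S-shaped with $W^+(0)=0$, $W^+(1)=1$, and $h^+_j:=W^+\!\left(\frac{n^+-j+1}{N}\right)-W^+\!\left(\frac{n^+-j}{N}\right)$ for $j=1,\dots,n^+$. The transitional index is $J:=\min\{j\in\{1,\dots,n^+\}: j\,h^+_{j+1}\ge \sum_{j'=1}^{j}h^+_{j'}\}$ with $h^+_{n^++1}=\infty$. (These conditions are the KKT conditions of minimizing $\sum_j y_j^{1/\alpha}$ subject to $0\le y_1\le\cdots\le y_{n^+}$, $\sum_j h^+_jy_j=v$.) *)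

(* Defs.v *)
From Stdlib Require Import Reals.
From Coquelicot Require Import Coquelicot.
Open Scope R_scope.

(* sum_{j=a}^{b} f j  (zero if b < a) *)
Definition rsum (f : nat -> R) (a b : nat) : R := sum_n_m f a b.

Definition unit_itv (x : R) : Prop := 0 <= x <= 1.

Definition has_deriv_on01 (f : R -> R) (x d : R) : Prop :=
  filterlim (fun t => (f t - f x) / (t - x))
    (within (fun t => t <> x /\ unit_itv t) (locally x)) (locally d).

Definition inverse_S_shaped (f : R -> R) : Prop :=
  (forall x y, unit_itv x -> unit_itv y -> x < y -> f x < f y) /\
  exists f' : R -> R,
    (forall x, unit_itv x -> has_deriv_on01 f x (f' x)) /\
    (forall x, unit_itv x ->
       filterlim f' (within unit_itv (locally x)) (locally (f' x))) /\
    exists x0, unit_itv x0 /\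
      (forall x y, 0 <= x -> x < y -> y <= x0 -> f' y < f' x) /\
      (forall x y, x0 <= x -> x < y -> y <= 1 -> f' x < f' y).

Definition hplus (W : R -> R) (N np : nat) (j : nat) : R :=
  W (INR (np + 1 - j) / INR N) - W (INR (np - j) / INR N).

(* The condition  j h^+_{j+1} >= sum_{j'=1}^j h^+_{j'}, with h^+_{n+ +1} = +infinity. *)
Definition trans_cond (W : R -> R) (N np : nat) (j : nat) : Prop :=
  j = np \/ INR j * hplus W N np (j + 1) >= rsum (hplus W N np) 1 j.

Definition is_transitional_index (W : R -> R) (N np J : nat) : Prop :=
  (1 <= J <= np)%nat /\ trans_cond W N np J /\
  (forall j, (1 <= j < J)%nat -> ~ trans_cond W N np j).

Section Candidate.
Variables (W : R -> R) (N np J : nat) (alpha v : R).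

Definition hp := hplus W N np.
Definition Ssum : R := rsum hp 1 J.
Definition Ybig : R :=
  v * Rpower Ssum (alpha / (1 - alpha)) /
  (Rpower Ssum (1 / (1 - alpha)) +
   Rpower (INR J) (alpha / (1 - alpha)) *
     rsum (fun j => Rpower (hp j) (1 / (1 - alpha))) (J + 1) np).

Definition ystar (j : nat) : R :=
  if (j <=? J)%nat then Ybig
  else Rpower (INR J * hp j / Ssum) (alpha / (1 - alpha)) * Ybig.

Definition abar : R := 1 / alpha.

Definition mu (j : nat) : R :=
  - (abar / v) * rsum (fun j' => Rpower (ystar j') abar) 1 np * rsum hp j np
  + abar * rsum (fun j' => Rpower (ystar j') (abar - 1)) j np.

Definition Lambda : R := - (abar * rsum (fun j' => Rpower (ystar j') abar) 1 np) / v.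
End Candidate.

(* Main.v *)
Require Import Defs.
From Stdlib Require Import Reals Lra Lia.
From Coquelicot Require Import Coquelicot.
Open Scope R_scope.

Lemma rs_split (f : nat -> R) n m k : (n <= S m)%nat -> (m <= k)%nat ->
  rsum f n k = rsum f n m + rsum f (S m) k.
Proof. intros; exact (sum_n_m_Chasles f n m k H H0). Qed.

Lemma rs_one (f : nat -> R) n : rsum f n n = f n.
Proof. exact (sum_n_n f n). Qed.

Lemma rs_first (f : nat -> R) j k : (j <= k)%nat ->
  rsum f j k = f j + rsum f (S j) k.
Proof. intros; rewrite (rs_split f j j k) by lia. rewrite rs_one; reflexivity. Qed.

Lemma rs_last (f : nat -> R) n m : (n <= S m)%nat ->
  rsum f n (S m) = rsum f n m + f (S m).
Proof. intros; exact (sum_n_Sm f n m H). Qed.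

Lemma rs_empty (f : nat -> R) n m : (m < n)%nat -> rsum f n m = 0.
Proof. intros; exact (sum_n_m_zero f n m H). Qed.

Lemma rs_plus (f g : nat -> R) n m :
  rsum (fun i => f i + g i) n m = rsum f n m + rsum g n m.
Proof. exact (sum_n_m_plus f g n m). Qed.

Lemma rs_scal c (f : nat -> R) n m :
  rsum (fun i => c * f i) n m = c * rsum f n m.
Proof. exact (sum_n_m_mult_l c f n m). Qed.

Lemma rs_ext (f g : nat -> R) n m : (forall k, (n <= k <= m)%nat -> f k = g k) ->
  rsum f n m = rsum g n m.
Proof. intros; apply sum_n_m_ext_loc; auto. Qed.

Lemma rs_minus (f g : nat -> R) n m :
  rsum (fun i => f i - g i) n m = rsum f n m - rsum g n m.
Proof.
  rewrite (rs_ext _ (fun i => f i + (-1) * g i)) by (intros; ring).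
  rewrite rs_plus. rewrite (rs_scal (-1) g). ring.
Qed.

Lemma rs_const1 c J : rsum (fun _ => c) 1 J = INR J * c.
Proof. unfold rsum. rewrite sum_n_m_const. f_equal. f_equal. lia. Qed.

Lemma rs_zero (f : nat -> R) n m : (forall k, (n <= k <= m)%nat -> f k = 0) ->
  rsum f n m = 0.
Proof. intros. rewrite (rs_ext f (fun _ => 0)) by auto. unfold rsum. rewrite sum_n_m_const. ring. Qed.

Lemma rs_nonneg (f : nat -> R) n m : (forall k, (n <= k <= m)%nat -> 0 <= f k) ->
  0 <= rsum f n m.
Proof.
  induction m; intros H.
  - destruct n. rewrite rs_one. apply H; lia. rewrite rs_empty by lia; lra.
  - destruct (Compare_dec.le_lt_dec n (S m)).
    + destruct (Nat.eq_dec n (S m)). subst. rewrite rs_one; apply H; lia.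
      rewrite rs_last by lia. assert (0 <= f (S m)) by (apply H; lia).
      assert (0 <= rsum f n m) by (apply IHm; intros; apply H; lia). lra.
    + rewrite rs_empty by lia; lra.
Qed.

Lemma rs_gt (f : nat -> R) c J : (1 <= J)%nat -> (forall k, (1 <= k <= J)%nat -> c < f k) ->
  INR J * c < rsum f 1 J.
Proof.
  induction J; intros H1 H.
  - lia.
  - destruct (Nat.eq_dec J 0). subst. rewrite rs_one. simpl. assert (c < f 1%nat) by (apply H; lia). lra.
    rewrite rs_last by lia. rewrite S_INR.
    assert (c < f (S J)) by (apply H; lia).
    assert (INR J * c < rsum f 1 J) by (apply IHJ; [lia| intros; apply H; lia]). lra.
Qed.

Lemma deriv_ed W x d : has_deriv_on01 W x d -> forall eps, 0 < eps ->
  exists del, 0 < del /\ forall t, unit_itv t -> t <> x -> Rabs (t - x) < del ->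
    Rabs ((W t - W x) / (t - x) - d) < eps.
Proof.
  intros H eps He.
  specialize (H (ball d eps) (locally_ball d (mkposreal eps He))).
  destruct H as [del Hd]. exists (pos del). split. apply cond_pos.
  intros t Ht Htx Hlt.
  assert (B : ball x del t) by exact Hlt.
  specialize (Hd t B (conj Htx Ht)). exact Hd.
Qed.

Lemma W_cont W x d : has_deriv_on01 W x d -> forall eps, 0 < eps ->
  exists del, 0 < del /\ forall t, unit_itv t -> Rabs (t - x) < del ->
    Rabs (W t - W x) < eps.
Proof.
  intros H eps He. destruct (deriv_ed W x d H 1 Rlt_0_1) as [del [Hdel Hd]].
  exists (Rmin del (eps / (Rabs d + 1))). split.
  { apply Rmin_pos; auto. apply Rdiv_lt_0_compat; auto. pose proof (Rabs_pos d); lra. }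
  intros t Ht Hlt.
  destruct (Req_dec t x) as [->|Htx]. { replace (W x - W x) with 0 by ring. rewrite Rabs_R0; auto. }
  assert (Hl1 : Rabs (t - x) < del) by (eapply Rlt_le_trans; [exact Hlt| apply Rmin_l]).
  assert (Hl2 : Rabs (t - x) < eps / (Rabs d + 1)) by (eapply Rlt_le_trans; [exact Hlt| apply Rmin_r]).
  specialize (Hd t Ht Htx Hl1).
  assert (Hq : Rabs ((W t - W x) / (t - x)) < Rabs d + 1).
  { pose proof (Rabs_triang ((W t - W x) / (t - x) - d) d).
    replace ((W t - W x) / (t - x) - d + d) with ((W t - W x) / (t - x)) in H0 by ring. lra. }
  assert (Htx' : t - x <> 0) by lra.
  replace (W t - W x) with ((W t - W x) / (t - x) * (t - x)) by (field; auto).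
  rewrite Rabs_mult.
  assert (0 < Rabs d + 1) by (pose proof (Rabs_pos d); lra).
  apply Rmult_lt_compat_r with (r := Rabs (t - x)) in Hq; [|apply Rabs_pos_lt; auto].
  apply Rmult_lt_compat_l with (r := Rabs d + 1) in Hl2; auto.
  replace ((Rabs d + 1) * (eps / (Rabs d + 1))) with eps in Hl2 by (field; lra).
  nra.
Qed.

Definition clamp (a b t : R) := Rmax a (Rmin b t).

Lemma clamp_in a b t : a <= b -> a <= clamp a b t <= b.
Proof. intros; unfold clamp, Rmax, Rmin; repeat destruct Rle_dec; lra. Qed.

Lemma clamp_id a b t : a <= t <= b -> clamp a b t = t.
Proof. intros; unfold clamp, Rmax, Rmin; repeat destruct Rle_dec; lra. Qed.

Lemma clamp_dist a b t c : a <= c <= b -> Rabs (clamp a b t - c) <= Rabs (t - c).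
Proof.
  intros; unfold clamp, Rmax, Rmin; repeat destruct Rle_dec;
  unfold Rabs; repeat destruct Rcase_abs; lra.
Qed.

Lemma W_mvt W f' a b : 0 <= a -> a < b -> b <= 1 ->
  (forall x, unit_itv x -> has_deriv_on01 W x (f' x)) ->
  exists c, a < c < b /\ W b - W a = f' c * (b - a).
Proof.
  intros Ha Hab Hb Hd.
  set (F := fun t => W (clamp a b t)).
  assert (Hder : forall c, a < c < b -> derivable_pt_lim F c (f' c)).
  { intros c Hc eps He.
    destruct (deriv_ed W c (f' c) (Hd c ltac:(unfold unit_itv; lra)) eps He) as [del [Hdel H]].
    assert (Hp : 0 < Rmin del (Rmin (c - a) (b - c))).
    { apply Rmin_pos; auto. apply Rmin_pos; lra. }
    exists (mkposreal _ Hp). intros k Hk Hkl. simpl in Hkl.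
    assert (Hk1 : Rabs k < del) by (eapply Rlt_le_trans; [exact Hkl| apply Rmin_l]).
    assert (Hk2 : Rabs k < Rmin (c - a) (b - c)) by (eapply Rlt_le_trans; [exact Hkl| apply Rmin_r]).
    assert (Hk3 : Rabs k < c - a) by (eapply Rlt_le_trans; [exact Hk2| apply Rmin_l]).
    assert (Hk4 : Rabs k < b - c) by (eapply Rlt_le_trans; [exact Hk2| apply Rmin_r]).
    assert (Hk5 : - Rabs k <= k <= Rabs k) by (unfold Rabs; destruct Rcase_abs; lra).
    unfold F. rewrite !clamp_id by lra.
    specialize (H (c + k) ltac:(unfold unit_itv; lra) ltac:(lra)).
    replace (c + k - c) with k in H by ring. apply H; auto. }
  assert (Hcont : forall c, a <= c <= b -> continuity_pt F c).
  { intros c Hc. unfold continuity_pt, continue_in, limit1_in, limit_in. simpl. unfold R_dist.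
    intros eps He.
    destruct (W_cont W c (f' c) (Hd c ltac:(unfold unit_itv; lra)) eps He) as [del [Hdel H]].
    exists del. split; auto. intros t [_ Ht].
    unfold F. rewrite (clamp_id a b c) by lra.
    pose proof (clamp_in a b t ltac:(lra)).
    apply H. unfold unit_itv; lra.
    eapply Rle_lt_trans; [apply clamp_dist; lra| exact Ht]. }
  pose (pr1 := fun c (P : a < c < b) => exist (fun l => derivable_pt_lim F c l) (f' c) (Hder c P)).
  pose (pr2 := fun c (P : a < c < b) => derivable_pt_id c).
  destruct (MVT F id a b pr1 pr2 Hab Hcont (fun c _ => derivable_continuous_pt _ _ (derivable_pt_id c)))
    as [c [P Hc]].
  exists c. split; auto.
  unfold pr1, pr2 in Hc. simpl in Hc. rewrite derive_pt_id in Hc.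
  unfold F, id in Hc. rewrite !clamp_id in Hc by lra. lra.
Qed.

Lemma shape3 W a d : inverse_S_shaped W -> 0 < d -> 0 <= a - d -> a + 2 * d <= 1 ->
  W (a + d) - W a < W a - W (a - d) \/ W (a + d) - W a < W (a + 2 * d) - W (a + d).
Proof.
  intros [_ [f' [Hd [_ [x0 [Hx0 [Hdec Hinc]]]]]]] Hdp Ha Hb.
  unfold unit_itv in Hx0.
  destruct (W_mvt W f' a (a + d) ltac:(lra) ltac:(lra) ltac:(lra) Hd) as [xi [Hxi Exi]].
  destruct (W_mvt W f' (a - d) a ltac:(lra) ltac:(lra) ltac:(lra) Hd) as [eta [Heta Eeta]].
  destruct (W_mvt W f' (a + d) (a + 2 * d) ltac:(lra) ltac:(lra) ltac:(lra) Hd) as [ze [Hze Eze]].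
  rewrite Exi, Eeta, Eze.
  replace (a + d - a) with d by ring. replace (a - (a - d)) with d by ring.
  replace (a + 2 * d - (a + d)) with d by ring.
  destruct (Rle_lt_dec (f' (a + d)) (f' a)) as [C|C].
  - left. apply Rmult_lt_compat_r; auto.
    assert (Hax : a <= x0).
    { destruct (Rle_lt_dec a x0); auto. pose proof (Hinc a (a + d) ltac:(lra) ltac:(lra) ltac:(lra)). lra. }
    assert (f' a < f' eta) by (apply Hdec; lra).
    destruct (Rle_lt_dec xi x0).
    + pose proof (Hdec a xi ltac:(lra) ltac:(lra) ltac:(lra)). lra.
    + pose proof (Hinc xi (a + d) ltac:(lra) ltac:(lra) ltac:(lra)). lra.
  - right. apply Rmult_lt_compat_r; auto.
    assert (Hax : x0 <= a + d).
    { destruct (Rle_lt_dec x0 (a + d)); auto. pose proof (Hdec a (a + d) ltac:(lra) ltac:(lra) ltac:(lra)). lra. }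
    assert (f' (a + d) < f' ze) by (apply Hinc; lra).
    destruct (Rle_lt_dec xi x0).
    + pose proof (Hdec a xi ltac:(lra) ltac:(lra) ltac:(lra)). lra.
    + pose proof (Hinc xi (a + d) ltac:(lra) ltac:(lra) ltac:(lra)). lra.
Qed.

Lemma div_le1 x n : 0 < n -> x <= n -> x / n <= 1.
Proof. intros. unfold Rdiv. rewrite <- (Rinv_r n) by lra. apply Rmult_le_compat_r; [left; apply Rinv_0_lt_compat; lra| lra]. Qed.

Lemma unit_nat k N : (0 < N)%nat -> (k <= N)%nat -> unit_itv (INR k / INR N).
Proof.
  intros. assert (0 < INR N) by (apply lt_0_INR; lia). split.
  - apply Rdiv_le_0_compat; auto. apply pos_INR.
  - apply div_le1; auto. apply le_INR; auto.
Qed.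

Lemma h_pos W N np j : (1 <= j <= np)%nat -> (np <= N)%nat -> inverse_S_shaped W ->
  0 < hplus W N np j.
Proof.
  intros Hj HN [Hinc _]. unfold hplus.
  assert (0 < INR N) by (apply lt_0_INR; lia).
  assert (INR (np - j) / INR N < INR (np + 1 - j) / INR N).
  { apply Rmult_lt_compat_r. apply Rinv_0_lt_compat; auto. apply lt_INR; lia. }
  pose proof (Hinc _ _ (unit_nat (np - j) N ltac:(lia) ltac:(lia)) (unit_nat (np + 1 - j) N ltac:(lia) ltac:(lia)) H0).
  lra.
Qed.

Lemma h_shape W N np j : (2 <= j <= np - 1)%nat -> (np <= N)%nat -> inverse_S_shaped W ->
  hplus W N np j < hplus W N np (j + 1) \/ hplus W N np j < hplus W N np (j - 1).
Proof.
  intros Hj HN Hs. unfold hplus.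
  assert (0 < INR N) by (apply lt_0_INR; lia).
  set (k := (np - j)%nat).
  set (a := INR k / INR N). set (d := 1 / INR N).
  replace (np + 1 - j)%nat with (k + 1)%nat by lia.
  replace (np + 1 - (j + 1))%nat with k by lia.
  replace (np - (j + 1))%nat with (k - 1)%nat by lia.
  replace (np + 1 - (j - 1))%nat with (k + 2)%nat by lia.
  replace (np - (j - 1))%nat with (k + 1)%nat by lia.
  assert (E1 : INR (k + 1) / INR N = a + d) by (unfold a, d; rewrite plus_INR; simpl; field; lra).
  assert (E2 : INR (k + 2) / INR N = a + 2 * d) by (unfold a, d; rewrite plus_INR; simpl; field; lra).
  assert (E3 : INR (k - 1) / INR N = a - d) by (unfold a, d; rewrite minus_INR by lia; simpl; field; lra).
  fold a. rewrite E1, E2, E3.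
  assert (0 < d) by (unfold d; apply Rdiv_lt_0_compat; lra).
  assert (0 <= a - d) by (rewrite <- E3; apply unit_nat; lia).
  assert (a + 2 * d <= 1) by (rewrite <- E2; apply unit_nat; lia).
  destruct (shape3 W a d Hs) as [C|C]; auto; lra.
Qed.

Lemma chain (h : nat -> R) np J :
  (forall j, (2 <= j <= np - 1)%nat -> h j < h (j + 1)%nat \/ h j < h (j - 1)%nat) ->
  (1 <= J)%nat -> ((J < np)%nat -> INR J * h (J + 1)%nat >= rsum h 1 J) ->
  forall j, (J + 1 <= j <= np - 1)%nat -> h j <= h (j + 1)%nat.
Proof.
  intros Hsh HJ Htr j Hj.
  destruct (Rle_lt_dec (h j) (h (j + 1)%nat)) as [|C]; auto. exfalso.
  assert (P : forall d i, (i + d = j)%nat -> (1 <= i)%nat -> h (i + 1)%nat < h i).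
  { induction d; intros i Hi H1.
    - replace i with j by lia; auto.
    - specialize (IHd (i + 1)%nat ltac:(lia) ltac:(lia)).
      destruct (Hsh (i + 1)%nat ltac:(lia)) as [C2|C2].
      + replace (i + 1 + 1)%nat with (i + 1 + 1)%nat in IHd by lia. lra.
      + replace (i + 1 - 1)%nat with i in C2 by lia. auto. }
  assert (Q : forall d i, (i + d = J)%nat -> (1 <= i)%nat -> h (J + 1)%nat < h i).
  { induction d; intros i Hi H1.
    - replace i with J by lia. apply (P (j - J)%nat J); lia.
    - specialize (IHd (i + 1)%nat ltac:(lia) ltac:(lia)).
      pose proof (P (j - i)%nat i ltac:(lia) H1). lra. }
  pose proof (rs_gt h (h (J + 1)%nat) J HJ ltac:(intros k Hk; apply (Q (J - k)%nat k); lia)).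
  specialize (Htr ltac:(lia)). lra.
Qed.

Lemma avg (h : nat -> R) J :
  (forall i, (1 <= i < J)%nat -> INR i * h (i + 1)%nat < rsum h 1 i) ->
  forall m, (1 <= m <= J)%nat -> INR J * rsum h 1 m >= INR m * rsum h 1 J.
Proof.
  intros Hm.
  assert (forall d m, (m + d = J)%nat -> (1 <= m)%nat -> INR J * rsum h 1 m >= INR m * rsum h 1 J).
  { induction d; intros m Hd H1.
    - replace m with J by lia. lra.
    - specialize (IHd (m + 1)%nat ltac:(lia) ltac:(lia)).
      rewrite Nat.add_1_r in IHd. rewrite rs_last in IHd by lia. rewrite S_INR in IHd.
      specialize (Hm m ltac:(lia)). rewrite Nat.add_1_r in Hm.
      assert (0 < INR m) by (apply lt_0_INR; lia).
      assert (0 <= INR J) by apply pos_INR.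
      set (A := rsum h 1 m) in *. set (B := rsum h 1 J) in *. set (x := h (S m)) in *.
      assert (INR J * (INR m * x) <= INR J * A) by (apply Rmult_le_compat_l; lra).
      assert (INR m * (INR J * (A + x)) >= INR m * ((INR m + 1) * B)) by (apply Rmult_ge_compat_l; lra).
      apply Rle_ge. apply Rmult_le_reg_l with (r := INR m + 1). lra. nra. }
  intros m Hm1. apply (H (J - m)%nat); lia.
Qed.

Lemma Rpower_pos x y : 0 < Rpower x y.
Proof. unfold Rpower; apply exp_pos. Qed.

Lemma Rpower_inv x y : 0 < x -> Rpower (/ x) y = / Rpower x y.
Proof. intros. unfold Rpower. rewrite ln_Rinv by auto. rewrite <- exp_Ropp. f_equal; ring. Qed.

Theorem lemma2 (N np : nat) (alpha : R) (W : R -> R) (v : R) (J : nat) :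
  (1 <= np <= N)%nat ->
  0 < alpha < 1 ->
  (forall x, unit_itv x -> unit_itv (W x)) ->
  inverse_S_shaped W -> W 0 = 0 -> W 1 = 1 ->
  0 < v ->
  is_transitional_index W N np J ->
  let h := hplus W N np in
  let y := ystar W N np J alpha v in
  let m := mu W N np J alpha v in
  let L := Lambda W N np J alpha v in
  let ab := abar alpha in
  (forall j, (1 <= j <= np - 1)%nat ->
     ab * Rpower (y j) (ab - 1) + m (j + 1)%nat - m j + L * h j = 0) /\
  ab * Rpower (y np) (ab - 1) - m np + L * h np = 0 /\
  (forall j, (1 <= j <= np - 1)%nat -> m (j + 1)%nat * (y j - y (j + 1)%nat) = 0) /\
  m 1%nat * y 1%nat = 0 /\
  rsum (fun j => h j * y j) 1 np = v /\
  (forall j, (1 <= j <= np)%nat -> 0 <= m j) /\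
  0 <= y 1%nat /\
  (forall j, (1 <= j <= np - 1)%nat -> y j <= y (j + 1)%nat).
Proof.
  intros Hnp Ha HWr Hs HW0 HW1 Hv HJ h y m L ab.
  destruct HJ as [HJr [HJt HJm]].
  set (p := alpha / (1 - alpha)).
  set (S := rsum h 1 J).
  set (Yb := Ybig W N np J alpha v).
  assert (Hh : forall j, (1 <= j <= np)%nat -> 0 < h j) by (intros; apply h_pos; auto; lia).
  assert (HJpos : 0 < INR J) by (apply lt_0_INR; lia).
  assert (HS : 0 < S).
  { unfold S. pose proof (rs_gt h 0 J ltac:(lia) ltac:(intros; apply Hh; lia)). lra. }
  assert (Hmin : forall i, (1 <= i < J)%nat -> INR i * h (i + 1)%nat < rsum h 1 i).
  { intros i Hi. specialize (HJm i Hi). unfold trans_cond in HJm.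
    apply Rnot_ge_lt. intro C. apply HJm. right. exact C. }
  assert (Htr : (J < np)%nat -> INR J * h (J + 1)%nat >= S).
  { intros HJn. destruct HJt as [C|C]; [lia| exact C]. }
  assert (Hmono : forall j, (J + 1 <= j <= np - 1)%nat -> h j <= h (j + 1)%nat).
  { apply (chain h np J); auto; [| lia]. intros j Hj. apply h_shape; auto; lia. }
  assert (Hp : 0 < p) by (unfold p; apply Rdiv_lt_0_compat; lra).
  assert (HQ : 0 <= rsum (fun j => Rpower (h j) (1 / (1 - alpha))) (J + 1) np).
  { apply rs_nonneg. intros; left; apply Rpower_pos. }
  assert (HYb : 0 < Yb).
  { unfold Yb, Ybig, Ssum, hp. fold h. fold S. fold p. apply Rdiv_lt_0_compat.
    apply Rmult_lt_0_compat; auto; apply Rpower_pos.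
    pose proof (Rpower_pos S (1 / (1 - alpha))). pose proof (Rpower_pos (INR J) p).
    nra. }
  assert (Hy1 : forall i, (i <= J)%nat -> y i = Yb).
  { intros i Hi. unfold y, ystar. rewrite (proj2 (Nat.leb_le i J) Hi). reflexivity. }
  assert (Hy2 : forall i, (J < i)%nat -> y i = Rpower (INR J * h i / S) p * Yb).
  { intros i Hi. unfold y, ystar. rewrite (proj2 (Nat.leb_gt i J) Hi). reflexivity. }
  assert (Hab1 : p * (ab - 1) = 1) by (unfold p, ab, abar; field; lra).
  assert (Hab : 0 < ab) by (unfold ab, abar; apply Rdiv_lt_0_compat; lra).
  set (Z := Rpower Yb (ab - 1)).
  set (k := INR J / S * Z).
  assert (Hk : 0 < k) by (unfold k; apply Rmult_lt_0_compat; [apply Rdiv_lt_0_compat; auto| apply Rpower_pos]).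
  set (e := fun i => if (i <=? J)%nat then S / INR J - h i else 0).
  assert (He1 : forall i, (i <= J)%nat -> e i = S / INR J - h i).
  { intros i Hi. unfold e. rewrite (proj2 (Nat.leb_le i J) Hi). reflexivity. }
  assert (He2 : forall i, (J < i)%nat -> e i = 0).
  { intros i Hi. unfold e. rewrite (proj2 (Nat.leb_gt i J) Hi). reflexivity. }
  assert (Hyk : forall i, (1 <= i <= np)%nat -> 0 < y i /\ Rpower (y i) (ab - 1) = k * h i + k * e i).
  { intros i Hi. destruct (Compare_dec.le_lt_dec i J) as [C|C].
    - rewrite Hy1, He1 by auto. split; auto. fold Z. unfold k. field. lra.
    - rewrite Hy2, He2 by auto.
      assert (Hc : 0 < INR J * h i / S) by (apply Rdiv_lt_0_compat; auto; apply Rmult_lt_0_compat; auto).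
      split. apply Rmult_lt_0_compat; auto; apply Rpower_pos.
      rewrite <- Rpower_mult_distr by (auto; apply Rpower_pos).
      rewrite Rpower_mult, Hab1, Rpower_1 by auto. fold Z. unfold k. field. lra. }
  assert (HQ' : 0 < S * Rpower S p + Rpower (INR J) p * rsum (fun j => Rpower (h j) (1 / (1 - alpha))) (J + 1) np).
  { pose proof (Rpower_pos S p). pose proof (Rpower_pos (INR J) p). nra. }
  assert (Hsum : rsum (fun j => h j * y j) 1 np = v).
  { rewrite (rs_split _ 1 J np) by lia.
    rewrite (rs_ext _ (fun j => Yb * h j) 1 J) by (intros; rewrite Hy1 by lia; ring). rewrite rs_scal. fold S.
    rewrite (rs_ext _ (fun j => (Yb * Rpower (INR J) p / Rpower S p) * Rpower (h j) (1 / (1 - alpha))) (Datatypes.S J) np).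
    2: { intros i Hi. rewrite Hy2 by lia. assert (Hhi : 0 < h i) by (apply Hh; lia).
         replace (1 / (1 - alpha)) with (1 + p) by (unfold p; field; lra).
         rewrite Rpower_plus, Rpower_1 by auto.
         replace (Rpower (INR J * h i / S) p) with (Rpower (INR J) p * Rpower (h i) p * / Rpower S p).
         field. apply Rgt_not_eq, Rpower_pos.
         rewrite <- Rpower_inv by auto.
         rewrite Rpower_mult_distr by auto. rewrite Rpower_mult_distr.
         reflexivity. apply Rmult_lt_0_compat; auto. apply Rinv_0_lt_compat; auto. }
    rewrite rs_scal. replace (Datatypes.S J) with (J + 1)%nat by lia.
    unfold Yb, Ybig, Ssum, hp. fold h. fold S. fold p.
    replace (1 / (1 - alpha)) with (1 + p) by (unfold p; field; lra).
    rewrite Rpower_plus, Rpower_1 by auto.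
    replace (1 / (1 - alpha)) with (1 + p) in HQ' by (unfold p; field; lra).
    field; repeat split; try (apply Rgt_not_eq; apply Rpower_pos); lra. }
  set (T := rsum (fun j => Rpower (y j) ab) 1 np).
  assert (HT : T = k * v).
  { unfold T. rewrite (rs_ext _ (fun i => k * (h i * y i) + k * (y i * e i)) 1 np).
    2: { intros i Hi. destruct (Hyk i Hi) as [Hyp Hyr].
         replace (Rpower (y i) ab) with (Rpower (y i) (1 + (ab - 1))) by (f_equal; ring).
         rewrite Rpower_plus, Rpower_1, Hyr by auto. ring. }
    rewrite rs_plus, rs_scal, rs_scal, Hsum.
    rewrite (rs_split _ 1 J np) by lia.
    rewrite (rs_zero _ (Datatypes.S J) np) by (intros; rewrite He2 by lia; ring).
    rewrite (rs_ext _ (fun i => Yb * (S / INR J) - Yb * h i) 1 J) by (intros; rewrite He1, Hy1 by lia; ring).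
    rewrite (rs_minus (fun _ => Yb * (S / INR J)) (fun i => Yb * h i)).
    rewrite rs_const1, rs_scal. fold S. field. lra. }
  assert (HG : forall j, (1 <= j)%nat -> rsum (fun i => Rpower (y i) (ab - 1)) j np = k * rsum h j np + k * rsum e j np).
  { intros j Hj. rewrite (rs_ext _ (fun i => k * h i + k * e i)) by (intros; apply Hyk; lia).
    rewrite rs_plus, rs_scal, rs_scal. reflexivity. }
  assert (Hm0 : forall j, m j = -(ab / v) * T * rsum h j np + ab * rsum (fun i => Rpower (y i) (ab - 1)) j np)
    by (intros; reflexivity).
  assert (HL : L = - (ab * T) / v) by reflexivity.
  assert (Hm : forall j, (1 <= j)%nat -> m j = ab * k * rsum e j np).
  { intros j Hj. rewrite Hm0, HG, HT by auto. field. lra. }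
  assert (HE0 : forall j, (J < j)%nat -> rsum e j np = 0).
  { intros j Hj. apply rs_zero. intros; apply He2; lia. }
  assert (HE1 : forall j, (1 <= j <= J)%nat -> rsum e j np = rsum (fun i => S / INR J - h i) j J).
  { intros j Hj. rewrite (rs_split _ j J np) by lia.
    rewrite (rs_zero _ (Datatypes.S J) np) by (intros; apply He2; lia).
    rewrite Rplus_0_r. apply rs_ext. intros; apply He1; lia. }
  assert (HF1 : rsum (fun i => S / INR J - h i) 1 J = 0).
  { rewrite (rs_minus (fun _ => S / INR J) h). rewrite rs_const1. fold S. field. lra. }
  assert (HFj : forall j, (1 <= j <= J)%nat -> 0 <= rsum (fun i => S / INR J - h i) j J).
  { intros j Hj. destruct (Nat.eq_dec j 1) as [->|Hj1]. rewrite HF1; lra.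
    rewrite (rs_split _ 1 (j - 1) J) in HF1 by lia.
    replace (Datatypes.S (j - 1)) with j in HF1 by lia.
    rewrite (rs_minus (fun _ => S / INR J) h) in HF1. rewrite rs_const1 in HF1.
    pose proof (avg h J Hmin (j - 1)%nat ltac:(lia)). fold S in H.
    assert (INR (j - 1) * (S / INR J) <= rsum h 1 (j - 1)).
    { apply Rmult_le_reg_l with (INR J); auto.
      replace (INR J * (INR (j - 1) * (S / INR J))) with (INR (j - 1) * S) by (field; lra). lra. }
    lra. }
  split; [| split; [| split; [| split; [| split; [| split; [| split]]]]]].
  - intros j Hj. rewrite !Hm0, HL. replace (j + 1)%nat with (Datatypes.S j) by lia.
    rewrite (rs_first h j np) by lia.
    rewrite (rs_first (fun i => Rpower (y i) (ab - 1)) j np) by lia.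
    field. lra.
  - rewrite Hm0, HL, !rs_one. field. lra.
  - intros j Hj. destruct (Compare_dec.le_lt_dec (j + 1) J) as [C|C].
    + rewrite !Hy1 by lia. ring.
    + rewrite Hm, HE0 by lia. ring.
  - rewrite Hm, HE1, HF1 by lia. ring.
  - exact Hsum.
  - intros j Hj. rewrite Hm by lia. destruct (Compare_dec.le_lt_dec j J) as [C|C].
    + rewrite HE1 by lia. apply Rmult_le_pos. apply Rmult_le_pos; lra. apply HFj; lia.
    + rewrite HE0 by lia. lra.
  - rewrite Hy1 by lia. lra.
  - intros j Hj. destruct (Compare_dec.le_lt_dec (j + 1) J) as [C|C].
    + rewrite !Hy1 by lia. lra.
    + rewrite (Hy2 (j + 1)%nat) by lia.
      assert (Hc : 0 < INR J * h (j + 1)%nat / S) by (apply Rdiv_lt_0_compat; auto; apply Rmult_lt_0_compat; auto; apply Hh; lia).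
      destruct (Nat.eq_dec j J) as [->|Hne].
      * rewrite Hy1 by lia.
        assert (1 <= INR J * h (J + 1)%nat / S).
        { specialize (Htr ltac:(lia)). apply Rmult_le_reg_r with S; auto.
          replace (INR J * h (J + 1)%nat / S * S) with (INR J * h (J + 1)%nat) by (field; lra). lra. }
        pose proof (Rle_Rpower _ 0 p H ltac:(lra)). rewrite Rpower_O in H0 by lra.
        pose proof (Rmult_le_compat_r Yb _ _ (Rlt_le _ _ HYb) H0). lra.
      * rewrite Hy2 by lia. apply Rmult_le_compat_r; [lra|].
        apply Rle_Rpower_l; [lra|]. split.
        apply Rdiv_lt_0_compat; auto; apply Rmult_lt_0_compat; auto; apply Hh; lia.
        unfold Rdiv. apply Rmult_le_compat_r. left; apply Rinv_0_lt_compat; auto.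
        apply Rmult_le_compat_l; [lra|]. apply Hmono; lia.
Qed.
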